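(* Let $\mathcal{C}$ be a permutation class (resp. polyomino class) and let $\mathcal{M}$ be its canonical $m$-basis. Assume that for every $M\in\mathcal{M}$ there exists a permutation (resp. polyomino) $P$ such that $M\preccurlyeq P$ and $M'\not\preccurlyeq P$ for all $M'\in\mathcal{M}$ with $M'\neq M$. Then $\mathcal{M}$ is a minimal $m$-basis of $\mathcal{C}$, and consequently $\mathcal{C}$ has a unique minimal $m$-basis.
   Context: Binary matrices have entries in $\{0,1\}$; $M'\preccurlyeq M$ (submatrix order) means $M'$ is obtained from $M$ by deleting some rows and/or columns. A permutation $\sigma$ of $\{1,\dots,n\}$ is identified with its permutation matrix ($M_\sigma(i,j)=1$ iff $i=\sigma(j)$); a permutation class is a set of permutations closed under taking submatrices that are permutation matrices. A quasi-permutation matrix is a binary matrix with at most one $1$ per row and column. A polyomino is a finite edge-connected union of unit cells of $\mathbb{Z}^2$ up to translation, identified with the binary matrix of its minimal bounding rectangle ($1$ for cells, $0$ otherwise); a polyomino class is a set of polyominoes closed under taking submatrices that are polyominoes. $Av(\mathcal{M})$ denotes the set of permutations (resp. polyominoes) with no submatrix in $\mathcal{M}$. For a class $\mathcal{C}$, $\mathcal{C}^+$ is the set of binary matrices that are submatrices of some element of $\mathcal{C}$; the canonical $m$-basis of $\mathcal{C}$ is the set of $\preccurlyeq$-minimal quasi-permutation matrices (permutation case), resp. binary matrices (polyomino case), not in $\mathcal{C}^+$. An $m$-basis of $\mathcal{C}$ is an antichain $\mathcal{M}$ with $\mathcal{C}=Av(\mathcal{M})$. A minimal $m$-basis of $\mathcal{C}$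 is an $m$-basis $\mathcal{M}$ such that (1) no strict subset $\mathcal{M}'\subsetneq\mathcal{M}$ satisfies $\mathcal{C}=Av(\mathcal{M}')$, and (2) for every $M\in\mathcal{M}$ and every submatrix $M'\preccurlyeq M$, either $M'=M$ or $\mathcal{C}\neq Av\big((\mathcal{M}\setminus\{M\})\cup\{M'\}\big)$. *)

(* Defs.v *)
From mathcomp Require Import all_boot all_order all_algebra all_fingroup.
Set Implicit Arguments. Unset Strict Implicit. Unset Printing Implicit Defensive.

Record bmx := BMx { bm_r : nat; bm_c : nat; bm_m : 'M[bool]_(bm_r, bm_c) }.

(* Submatrix order: M' is obtained from M by deleting rows and/or columns,
   i.e. M' = M restricted to strictly increasing row / column selections. *)
Definition submx (M' M : bmx) : Prop :=
  exists (f : 'I_(bm_r M') -> 'I_(bm_r M)) (g : 'I_(bm_c M') -> 'I_(bm_c M)),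
    (forall i i' : 'I_(bm_r M'), i < i' -> f i < f i')%N /\
    (forall j j' : 'I_(bm_c M'), j < j' -> g j < g j')%N /\
    bm_m M' = mxsub f g (bm_m M).

Notation "M' \preceq M" := (submx M' M) (at level 70).

Definition perm_bmx n (s : 'S_n) : bmx :=
  @BMx n n (\matrix_(i < n, j < n) (i == s j)).

Definition is_perm (M : bmx) : Prop := exists n (s : 'S_n), M = perm_bmx s.

Definition is_quasi_perm (M : bmx) : Prop :=
  (forall i j j', bm_m M i j -> bm_m M i j' -> j = j') /\
  (forall i i' j, bm_m M i j -> bm_m M i' j -> i = i').

Definition is_binary (M : bmx) : Prop := True.

Definition cell_adj r c (x y : 'I_r * 'I_c) : bool :=
  ((x.1 == y.1 :> nat) && ((x.2.+1 == y.2 :> nat) || (y.2.+1 == x.2 :> nat))) ||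
  ((x.2 == y.2 :> nat) && ((x.1.+1 == y.1 :> nat) || (y.1.+1 == x.1 :> nat))).

(* A polyomino, identified with the binary matrix of its minimal bounding
   rectangle: nonempty, every row and every column contains a cell, and the
   set of cells is edge-connected. *)
Definition is_polyomino (M : bmx) : Prop :=
  (0 < bm_r M)%N /\ (0 < bm_c M)%N /\
  (forall i, exists j, bm_m M i j) /\
  (forall j, exists i, bm_m M i j) /\
  (forall x y : 'I_(bm_r M) * 'I_(bm_c M),
     bm_m M x.1 x.2 -> bm_m M y.1 y.2 ->
     connect (fun u v => [&& bm_m M u.1 u.2, bm_m M v.1 v.2 & cell_adj u v]) x y).

(* Generic notions, parametrized by the universe U (permutations, resp.
   polyominoes). Sets of matrices are predicates bmx -> Prop. *)

Definition is_class (U : bmx -> Prop) (C : bmx -> Prop) : Prop :=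
  (forall P, C P -> U P) /\
  (forall P Q, C P -> U Q -> Q \preceq P -> C Q).

Definition cplus (C : bmx -> Prop) (M : bmx) : Prop := exists P, C P /\ M \preceq P.

(* Canonical m-basis: the preceq-minimal matrices of kind K (quasi-permutation
   matrices, resp. all binary matrices) that are not in C^+. *)
Definition canonical_basis (K : bmx -> Prop) (C : bmx -> Prop) (M : bmx) : Prop :=
  K M /\ ~ cplus C M /\
  (forall M', K M' -> ~ cplus C M' -> M' \preceq M -> M' = M).

Definition Av (U : bmx -> Prop) (Ms : bmx -> Prop) (P : bmx) : Prop :=
  U P /\ (forall M, Ms M -> ~ M \preceq P).

Definition same_set (A B : bmx -> Prop) : Prop := forall X, A X <-> B X.

Definition antichain (Ms : bmx -> Prop) : Prop :=
  forall M M', Ms M -> Ms M' -> M \preceq M' -> M = M'.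

Definition m_basis U (C Ms : bmx -> Prop) : Prop :=
  antichain Ms /\ same_set C (Av U Ms).

Definition minimal_m_basis U (C Ms : bmx -> Prop) : Prop :=
  m_basis U C Ms /\
  (forall Ms' : bmx -> Prop,
     (forall X, Ms' X -> Ms X) -> (exists X, Ms X /\ ~ Ms' X) ->
     ~ same_set C (Av U Ms')) /\
  (forall M, Ms M -> forall M', M' \preceq M ->
     M' = M \/ ~ same_set C (Av U (fun X => (Ms X /\ X <> M) \/ X = M'))).

Definition separated U (Ms : bmx -> Prop) : Prop :=
  forall M, Ms M -> exists P, U P /\ M \preceq P /\
    (forall M', Ms M' -> M' <> M -> ~ M' \preceq P).

Definition conclusion U (C Ms : bmx -> Prop) : Prop :=
  minimal_m_basis U C Ms /\
  (exists B, minimal_m_basis U C B /\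
     forall B', minimal_m_basis U C B' -> same_set B' B).

(* Main.v *)
Require Import Defs.
From mathcomp Require Import all_boot all_order all_algebra all_fingroup.
From mathcomp Require Import zify.
From Stdlib Require Import Classical.
Set Implicit Arguments. Unset Strict Implicit.

Lemma smono_inj n m (f : 'I_n -> 'I_m) :
  (forall i i' : 'I_n, i < i' -> f i < f i')%N -> injective f.
Proof.
move=> hf i i' e; case: (ltngtP i i') => h.
- by move: (hf _ _ h); rewrite e ltnn.
- by move: (hf _ _ h); rewrite e ltnn.
- exact: val_inj.
Qed.

Lemma smono_ge n m (f : 'I_n -> 'I_m) :
  (forall i i' : 'I_n, i < i' -> f i < f i')%N -> forall i : 'I_n, (i <= f i)%N.
Proof.
move=> hf.
suff H : forall k (i : 'I_n), nat_of_ord i = k -> (k <= f i)%N by move=> i; exact: H.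
elim=> [//|k IH] i hi.
have hk : (k < n)%N by have := ltn_ord i; lia.
have h0 := IH (Ordinal hk) erefl.
have h1 : (f (Ordinal hk) < f i)%N by apply: hf; rewrite /= hi.
lia.
Qed.

Lemma smono_id n (f : 'I_n -> 'I_n) :
  (forall i i' : 'I_n, i < i' -> f i < f i')%N -> forall i, f i = i.
Proof.
move=> hf i; apply: val_inj => /=.
pose f' := fun j : 'I_n => rev_ord (f (rev_ord j)).
have hf' : forall j j' : 'I_n, (j < j')%N -> (f' j < f' j')%N.
  move=> j j' h; rewrite /f' /=.
  have : (rev_ord j' < rev_ord j)%N by rewrite /=; have := ltn_ord j'; lia.
  move/hf; have := ltn_ord (f (rev_ord j)); have := ltn_ord (f (rev_ord j')); lia.
have h1 := smono_ge hf i.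
have h2 := smono_ge hf' (rev_ord i).
rewrite /f' rev_ordK /= in h2.
have := ltn_ord (f i); have := ltn_ord i; lia.
Qed.

Lemma submx_refl A : A \preceq A.
Proof.
exists id, id; split; [by []|split; [by []|]].
by apply/matrixP => i j; rewrite mxE.
Qed.

Lemma submx_trans A B D : A \preceq B -> B \preceq D -> A \preceq D.
Proof.
case=> f [g [hf [hg eA]]] [f' [g' [hf' [hg' eB]]]].
exists (f' \o f), (g' \o g); split; [|split].
- by move=> i i' h; apply: hf'; apply: hf.
- by move=> i i' h; apply: hg'; apply: hg.
- by rewrite eA eB; apply/matrixP => i j; rewrite !mxE.
Qed.

Lemma submx_size A B : A \preceq B -> (bm_r A <= bm_r B)%N /\ (bm_c A <= bm_c B)%N.
Proof.
case=> f [g [hf [hg _]]]; split.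
- by have := leq_card f (smono_inj hf); rewrite !card_ord.
- by have := leq_card g (smono_inj hg); rewrite !card_ord.
Qed.

Lemma submx_eq A B : A \preceq B -> bm_r A = bm_r B -> bm_c A = bm_c B -> A = B.
Proof.
case: A => r c a; case: B => r' c' b /= [f [g [hf [hg e]]]] /= Er Ec.
subst r' c'; move: e => /= ->; congr BMx; apply/matrixP => i j.
by rewrite mxE (smono_id hf) (smono_id hg).
Qed.

Lemma exists_canon (K C : bmx -> Prop) M : K M -> ~ cplus C M ->
  exists X, canonical_basis K C X /\ X \preceq M.
Proof.
suff H : forall n M, (bm_r M + bm_c M < n)%N -> K M -> ~ cplus C M ->
  exists X, canonical_basis K C X /\ X \preceq M.
  by apply: (H _ M (ltnSn _)).
elim=> [//|n IH] {}M hn hK hc.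
case: (classic (exists M'', K M'' /\ ~ cplus C M'' /\ M'' \preceq M /\ M'' <> M)).
- move=> [M'' [h1 [h2 [h3 h4]]]].
  have [hr hc'] := submx_size h3.
  have hlt : (bm_r M'' + bm_c M'' < bm_r M + bm_c M)%N.
    case: (ltnP (bm_r M'' + bm_c M'') (bm_r M + bm_c M)) => // hge.
    exfalso; apply: h4; apply: (submx_eq h3); lia.
  have [X [hX hXle]] := IH M'' ltac:(lia) h1 h2.
  exists X; split => //; exact: submx_trans hXle h3.
- move=> hne; exists M; split; last exact: submx_refl.
  split => //; split => // M' h1 h2 h3.
  apply: NNPP => h4; apply: hne; by exists M'.
Qed.

Lemma generic (U K C : bmx -> Prop) :
  (forall P, U P -> K P) -> (forall M M', K M -> M' \preceq M -> K M') ->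
  is_class U C -> separated U (canonical_basis K C) ->
  conclusion U C (canonical_basis K C).
Proof.
move=> hUK hKcl [hC1 hC2] hsep.
set Ms := canonical_basis K C.
have hAv : same_set C (Av U Ms).
  move=> P; split.
  - move=> hP; split; first exact: hC1.
    move=> M [_ [hnc _]] hle; apply: hnc; exists P; by split.
  - move=> [hU hav]; apply: NNPP => hnC.
    have hnc : ~ cplus C P.
      by move=> [Q [hQ hle]]; apply: hnC; exact: hC2 Q P hQ hU hle.
    have [X [hX hXle]] := exists_canon (hUK _ hU) hnc.
    exact: hav X hX hXle.
have hmin : minimal_m_basis U C Ms.
  split; [split => //|split].
  - move=> M M' hM [hK' [hnc' hmin']] hle.
    case: hM => hK [hnc _]; exact: hmin' M hK hnc hle.
  - move=> Ms' hsub [X [hX hnX]] heq.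
    have [P [hU [hXP hs]]] := hsep X hX.
    have hCP : C P.
      apply/heq; split => // M hM hle.
      apply: (hs M (hsub _ hM)) _ hle.
      by move=> e; subst.
    have [_ h] := (hAv P).1 hCP; exact: h X hX hXP.
  - move=> M hM M' hle.
    case: (classic (M' = M)) => hne; [by left|right] => heq.
    have hKM' := hKcl M M' hM.1 hle.
    have : cplus C M'.
      by apply: NNPP => hnc; apply: hne; exact: hM.2.2 M' hKM' hnc hle.
    move=> [Q [hQ hQle]].
    have [_ h] := (heq Q).1 hQ.
    by apply: (h M') => //; right.
split => //; exists Ms; split => // B' [[hanti hB] [hB1 hB2]].
have Bsub : forall N, B' N -> Ms N.
  move=> N hN.
  have hKN : K N.
    case: (classic (exists P, U P /\ N \preceq P)).
    - by move=> [P [hU hle]]; exact: hKcl P N (hUK P hU) hle.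
    - move=> hnex; exfalso.
      apply: (hB1 (fun X => B' X /\ X <> N)).
      + by move=> ? [].
      + by exists N; split => // [[_]]; apply.
      + move=> P; split.
        * move/hB => [hU h]; split => // Y [hY _]; exact: h.
        * move=> [hU h]; apply/hB; split => // Y hY hle.
          case: (classic (Y = N)) => e.
          -- subst Y; apply: hnex; by exists P.
          -- exact: h Y (conj hY e) hle.
  have hncN : ~ cplus C N.
    move=> [Q [hQ hle]]; have [_ h] := (hB Q).1 hQ; exact: h N hN hle.
  have [X' [hX' hX'N]] := exists_canon hKN hncN.
  case: (hB2 N hN X' hX'N) => [<- //|hno]; exfalso; apply: hno.
  move=> P; split.
  - move/hB => [hU h]; split => // Y [[hY _]|->]; first exact: h.
    move=> hX'P.
    have hCP : C P by apply/hB; split.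
    have [_ h'] := (hAv P).1 hCP; exact: h' X' hX' hX'P.
  - move=> [hU h]; apply/hB; split => // Y hY hle.
    case: (classic (Y = N)) => e.
    + subst Y; apply: (h X'); [by right | exact: submx_trans hX'N hle].
    + by apply: (h Y) => //; left.
move=> X; split; first exact: Bsub.
move=> hX; apply: NNPP => hnX.
have [P [hU [hXP hs]]] := hsep X hX.
have hCP : C P.
  apply/hB; split => // N hN hle.
  have hNM := Bsub N hN.
  case: (classic (N = X)) => e; first by subst.
  exact: hs N hNM e hle.
have [_ h] := (hAv P).1 hCP; exact: h X hX hXP.
Qed.

Theorem proposition7 :
  (forall C : bmx -> Prop, is_class is_perm C ->
     separated is_perm (canonical_basis is_quasi_perm C) ->
     conclusion is_perm C (canonical_basis is_quasi_perm C)) /\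
  (forall C : bmx -> Prop, is_class is_polyomino C ->
     separated is_polyomino (canonical_basis is_binary C) ->
     conclusion is_polyomino C (canonical_basis is_binary C)).
Proof.
split => C hC hs; apply: generic => //.
- move=> P [n [s ->]]; split => /= [i j j'|i i' j]; rewrite !mxE.
  + by move=> /eqP -> /eqP /perm_inj.
  + by move=> /eqP -> /eqP ->.
- move=> M M' [h1 h2] [f [g [hf [hg e]]]]; split.
  + move=> i j j'; rewrite e !mxE => a b.
    exact: (smono_inj hg) (h1 _ _ _ a b).
  + move=> i i' j; rewrite e !mxE => a b.
    exact: (smono_inj hf) (h2 _ _ _ a b).
Qed.
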